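(* Let $G=\langle V,E\rangle$ be a directed graph with non-empty finite sets of vertices $V$ (object constants) and edges $E\subseteq V\times V$, where every vertex occurs in some edge, and let $\mathcal{I}$ be a Herbrand interpretation over the signature $\{\mathit{in}\}$. Then $\mathcal{I}$ is an answer set of the modular program $\Pi_1(E)$ if and only if $\mathit{in}^{\mathcal{I}}$ is (the edge set of) a Hamiltonian cycle of $G$, i.e. the elements of $\mathit{in}^{\mathcal{I}}$ can be arranged as a directed cycle $(v_1,v_2),\dots,(v_n,v_1)$ with $v_1,\dots,v_n$ pairwise distinct and $\{v_1,\dots,v_n\}=V$.
   Context: Formulas: (F1) $\forall xy(\mathit{edge}(x,y)\to\mathit{vertex}(x))$; (F2) $\forall xy(\mathit{edge}(y,x)\to\mathit{vertex}(x))$; (F3) $\forall xy(\neg\neg\mathit{in}(x,y)\wedge\mathit{edge}(x,y)\to\mathit{in}(x,y))$; (F4) $\forall xy(\mathit{in}(x,y)\to r(x,y))$; (F5) $\forall xyz(r(x,z)\wedge r(z,y)\to r(x,y))$; (F6) $\forall xy(\neg r(x,y)\wedge\mathit{vertex}(x)\wedge\mathit{vertex}(y)\to\bot)$; (F7) $\forall xyz(\mathit{in}(x,y)\wedge\mathit{in}(x,z)\wedge\neg(y=z)\to\bot)$. $\neg G$ abbreviates $G\to\bot$. $\mathrm{SM}_{\vec{p}}[F]:=F\wedge\neg\exists\vec{U}((\vec{U}<\vec{p})\wedge F^* )$ with fresh predicate variables $\vec{U}$, where $\vec{U}<\vec{p}$ means $\bigwedge_i\forall\vec{x}(U_i(\vec{x})\to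 p_i(\vec{x}))\wedge\neg\bigwedge_i\forall\vec{x}(p_i(\vec{x})\to U_i(\vec{x}))$, and $F^*$: $F^*=F$ for atomic $F$ without members of $\vec{p}$; $p_i(\vec{t})^*=U_i(\vec{t})$; $(G\otimes H)^*=G^*\otimes H^*$ for $\otimes\in\{\wedge,\vee\}$; $(G\to H)^*=(G^*\to H^* )\wedge(G\to H)$; $(Qx\,G)^*=Qx\,G^*$. A def-module $(\vec{p}:F)$ has $\Phi((\vec{p}:F))=\mathrm{SM}_{\vec{p}}[F]$; a bare formula $F$ as a module means $(\emptyset:F)$ with $\Phi=F$. A modular program $\Pi=\langle\mathcal{S},\mathcal{M}\rangle$ has public predicates $\mathcal{S}$ and modules $\mathcal{M}$ (def-modules or modular programs), with $\Phi(\Pi)=\exists\vec{h}\bigwedge_{M\in\mathcal{M}}\Phi(M)$, $\vec{h}$ the free predicate symbols of the $\Phi(M)$ not in $\mathcal{S}$. An answer set of $\Pi$ is a Herbrand interpretation over $\mathcal{S}$ satisfying $\Phi(\Pi)$. Define $\Pi_{cn}=\langle\{\mathit{vertex},\mathit{in}\},\{(r:\mathrm{F4}\wedge\mathrm{F5}),\mathrm{F6}\}\rangle$, $\Pi_{hc}=\langle\{\mathit{vertex},\mathit{in}\},\{\Pi_{cn},\mathrm{F7}\}\rangle$, $\Pi_{sg}=\langle\{\mathit{vertex},\mathit{edge},\mathit{in}\},\{(\mathit{vertex}:\mathrm{F1}\wedge\mathrm{F2}),(\mathit{in}:\mathrm{F3})\}\rangle$, $\Pi_1=\langle\{\mathit{edge},\mathit{in}\},\{\Pi_{sg},\Pi_{hc}\}\rangle$,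 $M_E=(\mathit{edge}:\bigwedge\{\mathit{edge}(a,b)\mid(a,b)\in E\})$, and $\Pi_1(E)=\langle\{\mathit{in}\},\{\Pi_1,M_E\}\rangle$. *)

(* Defs.v *)
From HB Require Import structures.
From mathcomp Require Import all_boot.
Set Implicit Arguments.
Unset Strict Implicit.
Unset Printing Implicit Defensive.

Inductive psym := Pvertex | Pedge | Pin | Pr.

Definition psym_eqb (p q : psym) : bool :=
  match p, q with
  | Pvertex, Pvertex | Pedge, Pedge | Pin, Pin | Pr, Pr => true
  | _, _ => false
  end.

Lemma psym_eqP : Equality.axiom psym_eqb.
Proof. by case; case; constructor. Qed.

HB.instance Definition _ := hasDecEq.Build psym psym_eqP.

Definition arity (p : psym) : nat := if p is Pvertex then 1 else 2.

Inductive term (T : Type) := Var of nat | Const of T.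
Arguments Var {T}.

Inductive formula (T : Type) :=
| Atom of psym & seq (term T)
| Eq of term T & term T
| Bot
| And of formula T & formula T
| Or of formula T & formula T
| Imp of formula T & formula T
| Forall of nat & formula T
| Exists of nat & formula T.
Arguments Bot {T}.

Definition Neg T (F : formula T) : formula T := Imp F Bot.
Definition Top T : formula T := Neg Bot.
Definition bigAnd T (l : seq (formula T)) : formula T :=
  foldr (@And T) (Top T) l.

Section Semantics.
Variable T : Type.

(* interpretations of predicate symbols (Herbrand: universe = T) *)
Definition interp := psym -> seq T -> Prop.

Definition upd (env : nat -> T) (x : nat) (v : T) : nat -> T :=
  fun y => if y == x then v else env y.

Definition teval (env : nat -> T) (t : term T) : T :=
  match t with Var x => env x | Const c => c end.

Fixpoint eval (I : interp) (env : nat -> T) (F : formula T) : Prop :=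
  match F with
  | Atom p ts => I p (map (teval env) ts)
  | Eq t1 t2 => teval env t1 = teval env t2
  | Bot => False
  | And G H => eval I env G /\ eval I env H
  | Or G H => eval I env G \/ eval I env H
  | Imp G H => eval I env G -> eval I env H
  | Forall x G => forall v, eval I (upd env x v) G
  | Exists x G => exists v, eval I (upd env x v) G
  end.

(* evaluation of F^* : members of ps are replaced by the predicate
   variables U, implications get the extra conjunct (G -> H). *)
Fixpoint eval_star (I U : interp) (ps : seq psym) (env : nat -> T)
    (F : formula T) : Prop :=
  match F with
  | Atom p ts => if p \in ps then U p (map (teval env) ts)
                 else I p (map (teval env) ts)
  | Eq t1 t2 => teval env t1 = teval env t2
  | Bot => False
  | And G H => eval_star I U ps env G /\ eval_star I U ps env H
  | Or G H => eval_star I U ps env G \/ eval_star I U ps env H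
  | Imp G H => (eval_star I U ps env G -> eval_star I U ps env H)
               /\ (eval I env G -> eval I env H)
  | Forall x G => forall v, eval_star I U ps (upd env x v) G
  | Exists x G => exists v, eval_star I U ps (upd env x v) G
  end.

Definition ltU (U I : interp) (ps : seq psym) : Prop :=
  (forall q, q \in ps -> forall a, size a = arity q -> U q a -> I q a) /\
  ~ (forall q, q \in ps -> forall a, size a = arity q -> I q a -> U q a).

Definition SM (I : interp) (env : nat -> T) (ps : seq psym) (F : formula T)
  : Prop :=
  eval I env F /\ ~ (exists U : interp, ltU U I ps /\ eval_star I U ps env F).

Fixpoint preds (F : formula T) : seq psym :=
  match F with
  | Atom p _ => [:: p]
  | Eq _ _ | Bot => [::]
  | And G H | Or G H | Imp G H => preds G ++ preds H
  | Forall _ G | Exists _ G => preds G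
  end.

Inductive module :=
| DefMod of seq psym & formula T
| BareMod of formula T
| Prog of seq psym & seq module.

Fixpoint fpreds (M : module) : seq psym :=
  match M with
  | DefMod ps F => ps ++ preds F
  | BareMod F => preds F
  | Prog Sp ms =>
      [seq q <- flatten ((fix fl l := match l with
                                      | [::] => [::]
                                      | m :: l' => fpreds m :: fl l'
                                      end) ms) | q \in Sp]
  end.

Definition hidden (S : seq psym) (ms : seq module) : seq psym :=
  [seq q <- flatten (map fpreds ms) | q \notin S].

Definition override (I H : interp) (h : seq psym) : interp :=
  fun q => if q \in h then H q else I q.

Fixpoint msat (I : interp) (env : nat -> T) (M : module) : Prop :=
  match M with
  | DefMod ps F => SM I env ps F
  | BareMod F => eval I env F
  | Prog Sp ms =>
      exists H : interp,
        (fix all_sat l := match l with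
                          | [::] => True
                          | m :: l' => msat (override I H (hidden Sp ms)) env m
                                       /\ all_sat l'
                          end) ms
  end.

(* Phi(M) is a sentence; I satisfies it *)
Definition sat_module (I : interp) (M : module) : Prop :=
  forall env, msat I env M.

End Semantics.

Section Program.
Variable T : finType.

Definition vx : term T := Var 0.
Definition vy : term T := Var 1.
Definition vz : term T := Var 2.
Definition at1 (p : psym) (t : term T) : formula T := Atom p [:: t].
Definition at2 (p : psym) (t u : term T) : formula T := Atom p [:: t; u].

Definition F1 : formula T :=
  Forall 0 (Forall 1 (Imp (at2 Pedge vx vy) (at1 Pvertex vx))).
Definition F2 : formula T :=
  Forall 0 (Forall 1 (Imp (at2 Pedge vy vx) (at1 Pvertex vx))).
Definition F3 : formula T :=
  Forall 0 (Forall 1 (Imp (And (Neg (Neg (at2 Pin vx vy))) (at2 Pedge vx vy))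
                          (at2 Pin vx vy))).
Definition F4 : formula T :=
  Forall 0 (Forall 1 (Imp (at2 Pin vx vy) (at2 Pr vx vy))).
Definition F5 : formula T :=
  Forall 0 (Forall 1 (Forall 2
    (Imp (And (at2 Pr vx vz) (at2 Pr vz vy)) (at2 Pr vx vy)))).
Definition F6 : formula T :=
  Forall 0 (Forall 1
    (Imp (And (And (Neg (at2 Pr vx vy)) (at1 Pvertex vx)) (at1 Pvertex vy))
         Bot)).
Definition F7 : formula T :=
  Forall 0 (Forall 1 (Forall 2
    (Imp (And (And (at2 Pin vx vy) (at2 Pin vx vz)) (Neg (Eq vy vz))) Bot))).

Definition Pi_cn : module T :=
  Prog [:: Pvertex; Pin] [:: DefMod [:: Pr] (And F4 F5); BareMod F6].
Definition Pi_hc : module T :=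
  Prog [:: Pvertex; Pin] [:: Pi_cn; BareMod F7].
Definition Pi_sg : module T :=
  Prog [:: Pvertex; Pedge; Pin]
       [:: DefMod [:: Pvertex] (And F1 F2); DefMod [:: Pin] F3].
Definition Pi_1 : module T := Prog [:: Pedge; Pin] [:: Pi_sg; Pi_hc].

Definition M_E (E : {set T * T}) : module T :=
  DefMod [:: Pedge]
    (bigAnd [seq at2 Pedge (Const e.1) (Const e.2) | e <- enum E]).

Definition Pi_1E (E : {set T * T}) : module T :=
  Prog [:: Pin] [:: Pi_1; M_E E].

(* Herbrand interpretation over the signature {in}, given by the
   extension R of in; symbols outside the signature get the empty set
   (they do not occur free in Phi(Pi_1(E))). *)
Definition interp_in (R : T -> T -> Prop) : interp T :=
  fun q a => q = Pin /\
    match a with [:: x; y] => R x y | _ => False end.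

Definition answer_set_Pi_1E (E : {set T * T}) (R : T -> T -> Prop) : Prop :=
  sat_module (interp_in R) (Pi_1E E).

(* R is the edge set of a Hamiltonian cycle of G = <T, E>:
   R = {(v1,v2),...,(v_{n-1},v_n),(v_n,v1)} for an enumeration
   s = [v1;...;vn] of all vertices without repetition, all these pairs
   being edges of G ([next s v] is the cyclic successor of v in s). *)
Definition hamiltonian_cycle (E : {set T * T}) (R : T -> T -> Prop) : Prop :=
  exists s : seq T,
    [/\ uniq s, (forall v : T, v \in s),
        (forall v, v \in s -> (v, next s v) \in E) &
        (forall x y, R x y <-> (x \in s /\ y = next s x))].

End Program.

(* Main.v *)
Require Import Defs.
From HB Require Import structures.
From mathcomp Require Import all_boot.
From Stdlib Require Import Classical ClassicalEpsilon FunctionalExtensionality.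
Set Implicit Arguments. Unset Strict Implicit.

Section L.
Variable T : finType.
Implicit Types (J U : interp T) (env : nat -> T).

Inductive tc (Rl : T -> T -> Prop) : T -> T -> Prop :=
| tc1 x y : Rl x y -> tc Rl x y
| tcS x y z : Rl x y -> tc Rl y z -> tc Rl x z.

Lemma tc_trans Rl x y z : tc Rl x y -> tc Rl y z -> tc Rl x z.
Proof. elim=> [a b H|a b c H _ IH] Hz; [exact: tcS H Hz | exact: tcS H (IH Hz)]. Qed.

Lemma eval_bigAnd J env (l : seq (T * T)) :
  eval J env (bigAnd [seq at2 Pedge (Const e.1) (Const e.2) | e <- l]) <->
  (forall e, e \in l -> J Pedge [:: e.1; e.2]).
Proof.
elim: l => [|e l IH] /=; first by split=> // _ [].
rewrite IH; split=> [[H1 H2] e' |H]; first by rewrite inE => /orP[/eqP->|/H2].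
split; [apply: H; exact: mem_head| move=> e' He'; apply: H; by rewrite inE He' orbT].
Qed.

Lemma star_bigAnd J U env (l : seq (T * T)) :
  eval_star J U [:: Pedge] env (bigAnd [seq at2 Pedge (Const e.1) (Const e.2) | e <- l]) <->
  (forall e, e \in l -> U Pedge [:: e.1; e.2]).
Proof.
elim: l => [|e l IH] /=; first by split=> // _; split=> [[]|[]].
rewrite IH; split=> [[H1 H2] e' |H]; first by rewrite inE => /orP[/eqP->|/H2].
split; [apply: H; exact: mem_head| move=> e' He'; apply: H; by rewrite inE He' orbT].
Qed.

Lemma L_ME J env (E : {set T * T}) :
  SM J env [:: Pedge] (bigAnd [seq at2 Pedge (Const e.1) (Const e.2) | e <- enum E]) <->
  (forall x y, J Pedge [:: x; y] <-> (x, y) \in E).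
Proof.
rewrite /SM eval_bigAnd; split.
- move=> [Hev Hmin] x y; split; last by move=> H; apply: (Hev (x, y)); rewrite mem_enum.
  move=> Hj; apply: NNPP => Hn; apply: Hmin.
  exists (fun q a => J q a /\ (q = Pedge -> match a with [:: u; v] => (u, v) \in E | _ => True end)).
  split; last first.
    apply/star_bigAnd => e; rewrite mem_enum => He; split; first by apply: Hev; rewrite mem_enum.
    by case: e He.
  split; first by move=> q _ a _ [].
  move=> H; have /H : size [:: x; y] = arity Pedge by []. by move=> /(_ (mem_head _ _) Hj) [_ /(_ erefl)].
- move=> H; split; first by move=> e; rewrite mem_enum => He; apply/H; case: e He.
  move=> [U [[Hsub Hnot] /star_bigAnd Hst]]; apply: Hnot => q; rewrite inE => /eqP -> a.
  case: a => [|x [|y []]] // _ /H Hxy. by apply: (Hst (x, y)); rewrite mem_enum.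
Qed.
Lemma L12f J env : SM J env [:: Pvertex] (And (F1 T) (F2 T)) ->
  forall v w, J Pedge [:: v; w] \/ J Pedge [:: w; v] -> J Pvertex [:: v].
Proof. by move=> [[H1 H2] _] v w [/H1|/H2]. Qed.

Lemma L12b J env :
  (forall v, exists w, J Pedge [:: v; w] \/ J Pedge [:: w; v]) ->
  (forall v, J Pvertex [:: v]) -> SM J env [:: Pvertex] (And (F1 T) (F2 T)).
Proof.
move=> Hc Hv; split; first by split=> /= x y _; rewrite /upd /=.
move=> [U [[_ Hnot] [/= Hs1 /= Hs2]]]; apply: Hnot => q; rewrite inE => /eqP -> a.
case: a => [|v []] // _ _. have [w [Hw|Hw]] := Hc v.
- by have [+ _] := Hs1 v w; rewrite /upd /=; apply.
- by have [+ _] := Hs2 v w; rewrite /upd /=; apply.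
Qed.

Lemma L3f J env : SM J env [:: Pin] (F3 T) ->
  forall x y, J Pin [:: x; y] -> J Pedge [:: x; y].
Proof.
move=> [_ Hmin] x0 y0 Hj; apply: NNPP => Hn; apply: Hmin.
exists (fun q a => J q a /\ a <> [:: x0; y0]); split.
  split; first by move=> q _ a _ [].
  move=> H; have /H : size [:: x0; y0] = arity Pin by [].
  by move=> /(_ (mem_head _ _) Hj) [_].
move=> /= x y; rewrite /upd /=; split.
  move=> [[_ Hnn] He]; split; first exact: NNPP.
  by case=> Ex Ey; apply: Hn; rewrite -Ex -Ey.
by move=> [Hnn _]; apply: NNPP.
Qed.

Lemma L3b J env : (forall x y, J Pin [:: x; y] -> J Pedge [:: x; y]) ->
  SM J env [:: Pin] (F3 T).
Proof.
move=> Hs; split; first by move=> /= x y; rewrite /upd /= => [[Hnn _]]; apply: NNPP.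
move=> [U [[_ Hnot] /= Hst]]; apply: Hnot => q; rewrite inE => /eqP -> a.
case: a => [|x [|y []]] // _ Hj.
have [+ _] := Hst x y; rewrite /upd /=; apply; split; last exact: Hs.
split; first by move=> [_ ]; apply.
by apply.
Qed.

Lemma L45f J env : SM J env [:: Pr] (And (F4 T) (F5 T)) ->
  forall x y, J Pr [:: x; y] -> tc (fun a b => J Pin [:: a; b]) x y.
Proof.
move=> [[/= H4 /= H5] Hmin] x0 y0 Hj; apply: NNPP => Hn; apply: Hmin.
exists (fun q a => J q a /\ match a with [:: u; v] => tc (fun a b => J Pin [:: a; b]) u v | _ => True end).
split.
  split; first by move=> q _ a _ [].
  move=> H; have /H : size [:: x0; y0] = arity Pr by [].
  by move=> /(_ (mem_head _ _) Hj) [_].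
split=> /= x y.
  have := H4 x y; rewrite /upd /= => H; split=> // Hi; split; first exact: H.
  exact: tc1.
move=> z; have := H5 x y z; rewrite /upd /= => H; split=> //.
move=> [[A B] [C D]]; split; first exact: H.
exact: tc_trans B D.
Qed.

Lemma L45b J env :
  (forall x y, J Pr [:: x; y] <-> tc (fun a b => J Pin [:: a; b]) x y) ->
  SM J env [:: Pr] (And (F4 T) (F5 T)).
Proof.
move=> Hr; split.
  split=> /= x y; rewrite /upd /=.
    by move=> Hi; apply/Hr; exact: tc1.
  by move=> z [/Hr A /Hr B]; apply/Hr; exact: tc_trans A B.
move=> [U [[_ Hnot] [/= Hs4 /= Hs5]]]; apply: Hnot => q; rewrite inE => /eqP -> a.
case: a => [|x [|y []]] // _ /Hr Ht.
elim: Ht => [a b Hab|a b c Hab _ IH].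
  by have [+ _] := Hs4 a b; rewrite /upd /=; apply.
have [+ _] := Hs5 a c b; rewrite /upd /=; apply; split=> //.
by have [+ _] := Hs4 a b; rewrite /upd /=; apply.
Qed.

Lemma L6f J env : eval J env (F6 T) -> (forall v, J Pvertex [:: v]) ->
  forall x y, J Pr [:: x; y].
Proof.
move=> /= H Hv x y; apply: NNPP => Hn; apply: (H x y); rewrite /upd /=; split=> //.
Qed.

Lemma L6b J env : (forall x y, J Pr [:: x; y]) -> eval J env (F6 T).
Proof. by move=> H /= x y; rewrite /upd /= => [[[Hn _] _]]; apply: Hn. Qed.

Lemma L7f J env : eval J env (F7 T) ->
  forall x y z, J Pin [:: x; y] -> J Pin [:: x; z] -> y = z.
Proof.
move=> /= H x y z A B; apply: NNPP => Hn; apply: (H x y z); rewrite /upd /=; split=> //.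
Qed.

Lemma L7b J env : (forall x y z, J Pin [:: x; y] -> J Pin [:: x; z] -> y = z) ->
  eval J env (F7 T).
Proof. by move=> H /= x y z; rewrite /upd /= => [[[A B] C]]; apply/C/(H x). Qed.
End L.
Arguments tc {T}.
Section G. Variable T : finType.

Lemma tc_iter (Rl : T -> T -> Prop) (g : T -> T) : (forall z, Rl z (g z)) ->
  forall k z, tc Rl z (iter k.+1 g z).
Proof.
move=> Hg; elim=> [|k IH] z; first exact: tc1.
rewrite iterSr; apply: tcS (Hg z) (IH (g z)).
Qed.

Lemma tc_of_ham (E : {set T * T}) (Rl : T -> T -> Prop) :
  hamiltonian_cycle E Rl -> forall x y, tc Rl x y.
Proof.
move=> [s [Us Hs _ HR]] x y.
have Hg : forall z, Rl z (next s z) by move=> z; apply/HR.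
have Hc : fconnect (next s) (next s x) y by rewrite (fconnect_cycle (cycle_next Us)) ?mem_next.
rewrite -(iter_findex Hc) -iterSr; exact: tc_iter.
Qed.

Lemma tc_func (Rl : T -> T -> Prop) f : (forall x y, Rl x y <-> y = f x) ->
  forall x y, tc Rl x y -> exists k, y = iter k.+1 f x.
Proof.
move=> Hf x y; elim=> [a b /Hf ->|a b c /Hf -> _ [k ->]]; first by exists 0.
by exists k.+1; rewrite [RHS]iterSr.
Qed.

Lemma ham_of (E : {set T * T}) (v0 : T) (Rl : T -> T -> Prop) :
  (forall x y, Rl x y -> (x, y) \in E) ->
  (forall x y z, Rl x y -> Rl x z -> y = z) ->
  (forall x y, tc Rl x y) -> hamiltonian_cycle E Rl.
Proof.
move=> HE Hfun Htc.
have Hex : forall x, exists y, Rl x y.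
  move=> x; suff H: forall a b, tc Rl a b -> exists y, Rl a y by exact: H (Htc x x).
  by move=> a b [c d Hcd|c d e Hcd _]; exists d.
pose f x := proj1_sig (constructive_indefinite_description _ (Hex x)).
have Hfx : forall x, Rl x (f x) by move=> x; rewrite /f; case: constructive_indefinite_description.
have Hf : forall x y, Rl x y <-> y = f x.
  by move=> x y; split=> [H|->]; [exact: Hfun H (Hfx x)|exact: Hfx].
have [k Hk] := tc_func Hf (Htc v0 v0).
have cyc : fcycle f (orbit f v0) by apply/(orbitPcycle 0 3); exists k.
have Hall : forall v, v \in orbit f v0.
  by move=> v; have [j ->] := tc_func Hf (Htc v0 v); rewrite -fconnect_orbit fconnect_iter.
have Hnext : forall v, next (orbit f v0) v = f v.
  by move=> v; apply/esym/eqP; exact: (next_cycle cyc (Hall v)).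
exists (orbit f v0); split=> //.
- by move=> v _; rewrite Hnext; apply: HE.
- by move=> x y; rewrite Hnext Hf; split=> [->|[]].
Qed.
End G.

Lemma preds_bigAnd (T : finType) (l : seq (T * T)) :
  all (pred1 Pedge) (preds (bigAnd [seq at2 Pedge (Const e.1) (Const e.2) | e <- l])).
Proof. by elim: l => [|e l IH] //=. Qed.

Lemma hid_top (T : finType) (E : {set T * T}) (I H : interp T) :
  override I H (hidden [:: Pin] [:: Pi_1 T; M_E E]) = override I H [:: Pedge].
Proof.
apply: functional_extensionality => q; rewrite /override.
suff -> : (q \in hidden [:: Pin] [:: Pi_1 T; M_E E]) = (q \in [:: Pedge]) by [].
rewrite /hidden /= cats0.
have := preds_bigAnd (enum E); move/allP => Ha.
case: q => //=; rewrite !inE /= mem_filter; apply/negbTE/negP => /andP[_ /Ha] //.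
Qed.

Lemma tc_mono (T : finType) (A B : T -> T -> Prop) :
  (forall x y, A x y -> B x y) -> forall x y, tc A x y -> tc B x y.
Proof.
move=> AB x y; elim=> [a b /AB H|a b c /AB H _ IH]; [exact: tc1|exact: tcS H IH].
Qed.

Theorem proposition5 (T : finType) (E : {set T * T})
  (T_nonempty : exists v : T, True)
  (E_covers : forall v : T, exists w : T, ((v, w) \in E) || ((w, v) \in E))
  (R : T -> T -> Prop) :
  answer_set_Pi_1E E R <-> hamiltonian_cycle E R.
Proof.
have [v0 _] := T_nonempty.
rewrite /answer_set_Pi_1E /sat_module /Pi_1E /=.
have -> : hidden [:: Pedge; Pin] [:: Pi_sg T; Pi_hc T] = [:: Pvertex; Pvertex; Pvertex; Pvertex; Pvertex] by [].
have -> : hidden [:: Pvertex; Pedge; Pin] [:: DefMod [:: Pvertex] (And (F1 T) (F2 T)); DefMod [:: Pin] (F3 T)] = [::] by [].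
have -> : hidden [:: Pvertex; Pin] [:: Pi_cn T; BareMod (F7 T)] = [::] by [].
have -> : hidden [:: Pvertex; Pin] [:: DefMod [:: Pr] (And (F4 T) (F5 T)); BareMod (F6 T)] = [:: Pr; Pr; Pr; Pr; Pr; Pr] by [].
split.
- move=> /(_ (fun _ => v0)).
  move=> [H [[H0 [[H1 [S12 [S3 _]]] [[H1' [[H2 [S45 [E6 _]]] [E7 _]]] _]]] [SME _]]].
  rewrite !hid_top in S12 S3 S45 E6 E7 SME.
  move/L_ME: SME; rewrite /override /= => HE.
  have HV := L12f S12; rewrite /override /= in HV.
  have H3 := L3f S3; rewrite /override /= in H3.
  have H45 := L45f S45; rewrite /override /= in H45.
  have H6 := L6f E6; rewrite /override /= in H6.
  have H7 := L7f E7; rewrite /override /= in H7.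
  apply: (ham_of v0).
  + by move=> x y Rxy; apply/HE/H3; split.
  + by move=> x y z A B; apply: (H7 x); split.
  + have Hall : forall x y, H2 Pr [:: x; y].
      apply: H6 => v; have [w Hw] := E_covers v; apply: (HV v w).
      by case/orP: Hw => /HE; [left|right].
    move=> x y; apply: tc_mono (H45 _ _ (Hall x y)); by move=> a b; rewrite /interp_in => -[].
- move=> Hham env; have [s [Us Hs HsE HR]] := Hham.
  exists (fun q a => match a with [:: x; y] => (x, y) \in E | _ => False end).
  rewrite !hid_top; split; last first.
    split=> //; apply/L_ME => x y; rewrite /override /=; done.
  exists (fun _ _ => True); split; last split=> //.
    exists (fun _ _ => True); split; [|split=> //].
      apply: L12b; rewrite /override /= => //.
      move=> v; have [w Hw] := E_covers v; exists w; by case/orP: Hw; [left|right].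
    by apply: L3b; rewrite /override /= => x y [_ /HR [Hx ->]]; apply: HsE.
  exists (fun _ _ => True); split; last split=> //.
    exists (fun q a => match a with [:: x; y] => tc R x y | _ => False end).
    split; last split=> //.
      apply: L45b; rewrite /override /= => x y; split.
        by apply: tc_mono => a b Rab.
      by apply: tc_mono => a b [].
    apply: (L6b (J := override _ _ _)); rewrite /override /= => x y.
    exact: tc_of_ham Hham x y.
  apply: (L7b (J := override _ _ _)); rewrite /override /= => x y z [_ /HR [_ ->]] [_ /HR [_ ->]] //.
Qed.
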